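(* For every $\epsilon>0$, every connected graph admits a proper straight-line drawing with spanning ratio smaller than $1+\epsilon$.
   Context: A straight-line drawing maps vertices to distinct points of the plane and edges to straight-line segments between their end-vertices; it is proper if no edge contains a vertex other than its end-vertices. In a straight-line drawing $\Gamma$, $\pi_\Gamma(u,v)$ is the minimum total Euclidean length of a path between $u$ and $v$, $\|uv\|_\Gamma$ is their Euclidean distance, and the spanning ratio is $\max_{u\neq v}\pi_\Gamma(u,v)/\|uv\|_\Gamma$. *)

(* Defs.v *)
From HB Require Import structures.
From mathcomp Require Import all_boot all_order all_algebra.
From mathcomp Require Import classical_sets reals.
Set Implicit Arguments. Unset Strict Implicit. Unset Printing Implicit Defensive.
Import Order.TTheory GRing.Theory Num.Theory.
Local Open Scope ring_scope.
Local Open Scope classical_set_scope.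

Definition edist {R : realType} (a b : R * R) : R :=
  Num.sqrt ((a.1 - b.1) ^+ 2 + (a.2 - b.2) ^+ 2).

Definition simple_graph {V : finType} (e : rel V) : Prop :=
  symmetric e /\ irreflexive e.

Definition connected_graph {V : finType} (e : rel V) : Prop :=
  forall u v : V, connect e u v.

Definition on_segment {R : realType} (a b c : R * R) : Prop :=
  exists t : R, 0 <= t <= 1 /\
    c = (a.1 + t * (b.1 - a.1), a.2 + t * (b.2 - a.2)).

Definition proper_drawing {R : realType} {V : finType} (e : rel V)
  (p : V -> R * R) : Prop :=
  injective p /\
  forall u v w : V, e u v -> w != u -> w != v -> ~ on_segment (p u) (p v) (p w).

Fixpoint walk_length {R : realType} {V : finType} (p : V -> R * R)
  (u : V) (s : seq V) : R :=
  match s with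
  | [::] => 0
  | x :: s' => edist (p u) (p x) + walk_length p x s'
  end.

Definition path_dist {R : realType} {V : finType} (e : rel V)
  (p : V -> R * R) (u v : V) : R :=
  inf [set x : R | exists s : seq V,
        path e u s /\ last u s = v /\ x = walk_length p u s].

(* spanning ratio: max over u <> v of pi(u,v)/||uv|| (0 if < 2 vertices) *)
Definition spanning_ratio {R : realType} {V : finType} (e : rel V)
  (p : V -> R * R) : R :=
  \big[Num.max/0]_(u : V) \big[Num.max/0]_(v : V | v != u)
     (path_dist e p u v / edist (p u) (p v)).

(* Main.v *)
Require Import Defs.
From mathcomp Require Import all_boot all_order all_algebra.
From mathcomp Require Import classical_sets reals.
From mathcomp Require Import ring lra zify.
Set Implicit Arguments. Unset Strict Implicit. Unset Printing Implicit Defensive.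
Import Order.TTheory GRing.Theory Num.Theory.

Section Comb.
Variables (V : finType) (e : rel V) (r : V).
Hypothesis esym : symmetric e.
Hypothesis econn : connected_graph e.

Definition dP v k := [exists t : k.-tuple V, path e r t && (last r t == v)].

Lemma dP_ex v : exists k, dP v k.
Proof.
case/connectP: (econn r v) => s ps ->. exists (size s); apply/existsP.
by exists (in_tuple s); rewrite ps eqxx.
Qed.

Definition d v := ex_minn (dP_ex v).

Lemma d_spec v : dP v (d v) /\ forall m, dP v m -> (d v <= m)%N.
Proof. by rewrite /d; case: ex_minnP => m Pm mn; split. Qed.

Lemma d_neighbor v : v != r -> exists w, e w v /\ (d w < d v)%N.
Proof.
move=> vr; have [/existsP [[s /= sz] /andP [ps /eqP ls]] _] := d_spec v.
move: ps ls sz; case/lastP: s => [|s z] /=.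
  by move=> _ lr; rewrite -lr eqxx in vr.
rewrite rcons_path last_rcons size_rcons => /andP [ps ez] zv /eqP sz.
exists (last r s); split; first by rewrite -zv.
have [_ mn] := d_spec (last r s).
have: dP (last r s) (size s) by apply/existsP; exists (in_tuple s); rewrite ps eqxx.
move/mn; lia.
Qed.

Definition f v := (d v * #|V| + enum_rank v)%N.

Lemma f_inj : injective f.
Proof.
move=> u v h.
have: (d u * #|V| + enum_rank u) %% #|V| = (d v * #|V| + enum_rank v) %% #|V|.
  by move: h; rewrite /f => ->.
rewrite !modnMDl !modn_small // => h2.
by apply/enum_rank_inj/ord_inj.
Qed.

Lemma d_r : d r = 0%N.
Proof.
have [_ mn] := d_spec r.
have: dP r 0 by apply/existsP; exists [tuple]; rewrite /= eqxx.
by move/mn; case: (d r).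
Qed.

Lemma f_r v : v != r -> (f r < f v)%N.
Proof.
move=> vr; have [w [_ dw]] := d_neighbor vr.
rewrite /f d_r mul0n add0n.
have hk : (nat_of_ord (enum_rank r) < #|V|)%N by exact: ltn_ord.
have h1 : (#|V| <= d v * #|V|)%N by rewrite leq_pmull // (leq_ltn_trans _ dw).
lia.
Qed.

Lemma f_neighbor v : v != r -> exists w, e v w /\ (f w < f v)%N.
Proof.
move=> vr; have [w [ewv dw]] := d_neighbor vr.
exists w; split; first by rewrite esym.
have hk : (nat_of_ord (enum_rank w) < #|V|)%N by exact: ltn_ord.
rewrite /f; nia.
Qed.

Lemma down_walk u : exists s, [/\ path e u s, last u s = r,
  all (fun z => f z <= f u)%N s & (size s <= f u)%N].
Proof.
have [n] := ubnP (f u); elim: n u => // n IH u lt.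
case: (eqVneq u r) => [->|ur]; first by exists [::].
have [w [euw fw]] := f_neighbor ur.
have [s [ps ls als ss]] := IH w (leq_trans fw lt).
exists (w :: s); split => //=; first by rewrite euw.
  rewrite (ltnW fw) /=; apply: sub_all als => z /= h; exact: leq_trans h (ltnW fw).
exact: leq_ltn_trans ss fw.
Qed.

Lemma all_belast (P : pred V) u s : P u -> all P s -> all P (belast u s).
Proof. by elim: s u => //= y s IH u Pu /andP [Py Ps]; rewrite Pu IH. Qed.

Lemma rev_walk (P : pred V) u s : path e u s -> P u -> all P s ->
  exists s', [/\ path e (last u s) s', last (last u s) s' = u, all P s'
    & size s' = size s].
Proof.
move=> ps Pu Ps; exists (rev (belast u s)); split.
- by rewrite rev_path (@eq_path _ _ e) // => x y /=; exact: esym.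
- case: s {ps Ps} => //= y s; rewrite rev_cons last_rcons //.
- by rewrite all_rev all_belast.
- by rewrite size_rev size_belast.
Qed.

Lemma low_walk u v : exists s, [/\ path e u s, last u s = v,
  all (fun z => f z <= maxn (f u) (f v))%N s & (size s <= f u + f v)%N].
Proof.
have [s1 [p1 l1 a1 z1]] := down_walk u; have [s2 [p2 l2 a2 z2]] := down_walk v.
have [s3 [p3 l3 a3 z3]] := @rev_walk (fun z => f z <= f v)%N v s2 p2 (leqnn _) a2.
rewrite l2 in p3 l3.
exists (s1 ++ s3); split.
- by rewrite cat_path p1 l1.
- by rewrite last_cat l1.
- rewrite all_cat; apply/andP; split.
    by apply: sub_all a1 => z /= h; rewrite leq_max h.
  by apply: sub_all a3 => z /= h; rewrite leq_max h orbT.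
- rewrite size_cat z3; lia.
Qed.

End Comb.
Local Open Scope ring_scope.
Section Geo.
Variable R : realType.

Lemma edistC (a b : R * R) : edist a b = edist b a.
Proof. by rewrite /edist -(sqrrN (a.1 - b.1)) -(sqrrN (a.2 - b.2)) !opprB. Qed.

Lemma edist_le (a b : R * R) : edist a b <= `|a.1 - b.1| + `|a.2 - b.2|.
Proof.
rewrite /edist; set x := a.1 - b.1; set y := a.2 - b.2.
have hx := normr_ge0 x; have hy := normr_ge0 y.
apply: le_trans (ler_wsqrtr (_ : _ <= (`|x| + `|y|) ^+ 2)) _.
  rewrite -(real_normK (num_real x)) -(real_normK (num_real y)); nra.
by rewrite sqrtr_sqr ger0_norm // addr_ge0.
Qed.

Lemma edist_ge (a b : R * R) : `|a.2 - b.2| <= edist a b.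
Proof.
rewrite /edist -sqrtr_sqr ler_wsqrtr //.
have := sqr_ge0 (a.1 - b.1); lra.
Qed.

Lemma edist_ge0 (a b : R * R) : 0 <= edist a b.
Proof. exact: sqrtr_ge0. Qed.

Lemma dist_bound (x y m : R) : 0 <= x <= m -> 0 <= y <= m -> `|x - y| <= m.
Proof. move=> /andP [x0 xm] /andP [y0 ym]; rewrite ler_norml; lra. Qed.

Definition pt (K : R) (n : nat) : R * R := (K ^+ n, (K ^+ n) ^+ 2).

Lemma pow_bound (K : R) n c : 1 <= K -> (n <= c)%N -> 0 <= K ^+ n <= K ^+ c.
Proof.
move=> K1 nc; rewrite exprn_ge0 /=; last lra.
exact: ler_weXn2l.
Qed.

Lemma pt_edge K c n m : 1 <= K -> (n <= c)%N -> (m <= c)%N ->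
  edist (pt K n) (pt K m) <= K ^+ c + (K ^+ c) ^+ 2.
Proof.
move=> K1 nc mc; apply: le_trans (edist_le _ _) _; rewrite /=.
have /andP [hn1 hn2] := pow_bound K1 nc; have /andP [hm1 hm2] := pow_bound K1 mc.
apply: lerD; apply: dist_bound; apply/andP; split; rewrite ?sqr_ge0 //; nra.
Qed.

Lemma walk_length_cat (V : finType) (p : V -> R * R) u s1 s2 :
  walk_length p u (s1 ++ s2) = walk_length p u s1 + walk_length p (last u s1) s2.
Proof. by elim: s1 u => /= [|x s IH] u; [rewrite add0r | rewrite IH addrA]. Qed.

Lemma walk_length_ge0 (V : finType) (p : V -> R * R) u s : 0 <= walk_length p u s.
Proof. by elim: s u => //= x s IH u; rewrite addr_ge0 // edist_ge0. Qed.

Lemma walk_bound (V : finType) (g : V -> nat) K c u s : 1 <= K ->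
  all (fun z => g z <= c)%N (u :: s) ->
  walk_length (fun v => pt K (g v)) u s <= (size s)%:R * (K ^+ c + (K ^+ c) ^+ 2).
Proof.
move=> K1; elim: s u => /= [|x s IH] u; first by rewrite mul0r.
move=> /andP [gu /andP [gx gs]].
rewrite -add1n natrD mulrDl mul1r; apply: lerD; first exact: pt_edge.
by apply: IH; rewrite /= gx gs.
Qed.

Lemma path_dist_le (V : finType) (e : rel V) (p : V -> R * R) x y s :
  path e x s -> last x s = y -> path_dist e p x y <= walk_length p x s.
Proof.
move=> ps ls; rewrite /path_dist; apply: ge_inf.
  by exists 0 => z [s' [_ [_ ->]]]; exact: walk_length_ge0.
by exists s.
Qed.

End Geo.

Theorem theorem5 (R : realType) (eps : R) (heps : 0 < eps)
  (V : finType) (e : rel V) :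
  simple_graph e -> connected_graph e ->
  exists p : V -> R * R,
    proper_drawing e p /\ spanning_ratio e p < 1 + eps.
Proof.
move=> [esym eirr] econn.
case: (pickP (@predT V)) => [r _ | hn]; last first.
  exists (fun _ => (0, 0)); split; first by split => [x|x]; have := hn x.
  by apply: bigmax_lt => [|x]; [lra | have := hn x].
pose F := f r econn.
pose Fm := (\max_(z : V) F z)%N.
pose B : R := (2 * Fm)%:R.
have B0 : 0 <= B by rewrite ler0n.
pose K : R := 1 + (2 * B + 3) / eps.
have K1 : 1 < K.
  by rewrite /K ltrDl divr_gt0 //; lra.
have hKe : eps * K = eps + 2 * B + 3.
  by rewrite /K mulrDr mulr1 mulrCA divff ?mulr1 ?gt_eqF //; lra.
pose p := fun v => pt K (F v).
have Kinj : forall a b, K ^+ a = K ^+ b -> a = b.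
  move=> a b h; apply/eqP; rewrite eqn_leq -(ler_eXn2l K1) h lexx.
  by rewrite -(ler_eXn2l K1) h lexx.
have pinj : forall u v, K ^+ F u = K ^+ F v -> u = v.
  by move=> u v /Kinj /f_inj.
exists p; split.
  split; first by move=> u v /(congr1 fst) /pinj.
  move=> u v w euv wu wv [t [/andP [t0 t1]]].
  rewrite /p /pt /= => -[h1 h2].
  set X := K ^+ F u in h1 h2; set Y := K ^+ F v in h1 h2; set Z := K ^+ F w in h1 h2.
  have : (t ^+ 2 - t) * (Y - X) ^+ 2 = 0.
    have -> : (t ^+ 2 - t) * (Y - X) ^+ 2 =
      (X + t * (Y - X)) ^+ 2 - (X ^+ 2 + t * (Y ^+ 2 - X ^+ 2)) by ring.
    by rewrite -h1 -h2 subrr.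
  move/eqP; rewrite mulf_eq0 => /orP [|].
    have -> : t ^+ 2 - t = t * (t - 1) by ring.
    rewrite mulf_eq0 subr_eq0 => /orP [] /eqP ht.
      by move: h1; rewrite ht mul0r addr0 => /pinj /eqP; rewrite (negbTE wu).
    by move: h1; rewrite ht mul1r addrC subrK => /pinj /eqP; rewrite (negbTE wv).
  rewrite sqrf_eq0 subr_eq0 => /eqP /pinj vu.
  by move: euv; rewrite vu eirr.
have key : forall t o, (F o < F t)%N ->
  exists W D, [/\ path_dist e p t o <= W, path_dist e p o t <= W,
    D <= edist (p t) (p o), 0 < D & W < (1 + eps) * D].
  move=> t o lt.
  have tr : t != r.
    apply/eqP => tr; subst t.
    have or : o != r by apply/eqP => or; rewrite or ltnn in lt.
    by have := f_r econn or; rewrite -/F ltnNge (ltnW lt).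
  have [w [etw Fw]] := f_neighbor esym econn tr; rewrite -/F in Fw.
  set a := F t.
  have a0 : (0 < a)%N by apply: leq_ltn_trans lt.
  set L := K ^+ a.-1.
  have L1 : 1 <= L by rewrite exprn_ege1 //; lra.
  have hT : K ^+ a = K * L by rewrite /L -exprS prednK.
  have hFm : forall z, (F z <= Fm)%N by move=> z; exact: (leq_bigmax z).
  have Fwa : (F w <= a.-1)%N by rewrite -ltnS prednK.
  have Foa : (F o <= a.-1)%N by rewrite -ltnS prednK.
  have edge : edist (p t) (p w) <= K ^+ a + (K ^+ a) ^+ 2.
    by apply: pt_edge; [exact: ltW | exact: leqnn | exact: ltnW].
  have lowb : forall x y s, (F x <= a.-1)%N -> (F y <= a.-1)%N ->
      all (fun z => F z <= maxn (F x) (F y))%N s -> (size s <= F x + F y)%N ->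
      walk_length p x s <= B * (L + L ^+ 2).
    move=> x y s hx hy als ss.
    apply: le_trans (@walk_bound R V F K a.-1 x s (ltW K1) _) _.
      rewrite /= hx /=; apply: sub_all als => z /= hz.
      by apply: leq_trans hz _; rewrite geq_max hx hy.
    apply: ler_wpM2r; first by rewrite addr_ge0 ?sqr_ge0 // (le_trans ler01 L1).
    rewrite /B ler_nat; apply: leq_trans ss _.
    by have := hFm x; have := hFm y; lia.
  exists (K ^+ a + (K ^+ a) ^+ 2 + B * (L + L ^+ 2)), ((K ^+ a) ^+ 2 - L ^+ 2).
  split.
  - have [s [ps ls als ss]] := low_walk r esym econn w o.
    apply: le_trans (path_dist_le (s := w :: s) _ _ _) _.
    + by rewrite /= etw.
    + by [].
    rewrite /=; apply: lerD => //; exact: lowb als ss.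
  - have [s [ps ls als ss]] := low_walk r esym econn o w.
    apply: le_trans (path_dist_le (s := s ++ [:: t]) _ _ _) _.
    + by rewrite cat_path ps ls /= esym etw.
    + by rewrite last_cat ls.
    rewrite walk_length_cat ls /= addr0 edistC addrC.
    apply: lerD => //; exact: lowb als ss.
  - apply: le_trans (edist_ge _ _); rewrite /p /pt /=.
    have /andP [h0 h1] := pow_bound (ltW K1) Foa; rewrite -/L in h1.
    apply: le_trans (ler_norm _); nra.
  - rewrite hT; have -> : (K * L) ^+ 2 - L ^+ 2 = L ^+ 2 * (K ^+ 2 - 1) by ring.
    rewrite mulr_gt0 // ?exprn_gt0 //; [lra | nra].
  - rewrite hT.
    have hK2 : eps * K ^+ 2 = K * (eps + 2 * B + 3) by rewrite -hKe; ring.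
    have q1 : 0 <= (K - 1) * eps by rewrite mulr_ge0 //; lra.
    have q2 : 0 <= (K - 1) * B by rewrite mulr_ge0 //; lra.
    have h1 : K + K ^+ 2 + 2 * B < (1 + eps) * (K ^+ 2 - 1).
      have -> : (1 + eps) * (K ^+ 2 - 1) = K ^+ 2 - 1 - eps + eps * K ^+ 2 by ring.
      rewrite hK2.
      have -> : K * (eps + 2 * B + 3) = (K - 1) * eps + eps + 2 * ((K - 1) * B) + 2 * B + 3 * K by ring.
      lra.
    have h2 : K * L + (K * L) ^+ 2 + B * (L + L ^+ 2) <= (K + K ^+ 2 + 2 * B) * L ^+ 2.
      have q3 : 0 <= (K + B) * (L * (L - 1)).
        by rewrite mulr_ge0 // ?mulr_ge0 //; lra.
      have -> : (K + K ^+ 2 + 2 * B) * L ^+ 2 = K * L + (K * L) ^+ 2 + B * (L + L ^+ 2) + (K + B) * (L * (L - 1)) by ring.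
      lra.
    apply: le_lt_trans h2 _.
    have -> : (1 + eps) * ((K * L) ^+ 2 - L ^+ 2) = ((1 + eps) * (K ^+ 2 - 1)) * L ^+ 2 by ring.
    by rewrite ltr_pM2r // exprn_gt0 //; lra.
apply: bigmax_lt => [|u _]; first lra.
apply: bigmax_lt => [|v vu]; first lra.
have hF : F u != F v by apply: contra vu => /eqP /f_inj ->.
have fin : forall W D x y, x <= W -> D <= y -> 0 < D -> W < (1 + eps) * D -> x / y < 1 + eps.
  move=> W D x y xW Dy D0 WD.
  rewrite ltr_pdivrMr; last exact: lt_le_trans Dy.
  apply: le_lt_trans xW _; apply: lt_le_trans WD _.
  by rewrite ler_wpM2l //; lra.
case: (ltngtP (F u) (F v)) hF => // h _.
  have [W [D [h1 h2 h3 h4 h5]]] := key v u h.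
  by apply: fin h2 _ h4 h5; rewrite edistC.
have [W [D [h1 h2 h3 h4 h5]]] := key u v h.
exact: fin h1 h3 h4 h5.
Qed.
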